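(* Let $A=2^\omega$, the set of subsets of $\omega$, partially ordered by inclusion, and let $U_\subseteq(A)\subseteq 2^A$ be its set of up-sets. For each $n\in\omega$ let $e_n\in U_\subseteq(A)$ be the set of subsets of $\omega$ containing $n$. Then for $x\in U_\subseteq(A)$ the following are equivalent: (i) $x$ is an isolated point of $U_\subseteq(A)$ in the topology induced by the natural topology on $2^A$; (ii) $x$ is both the union of a finite (possibly empty) family of principal up-sets of $A$ and the intersection of a finite (possibly empty) family of complements of principal down-sets of $A$; (iii) $x$ lies in the closure of $\{e_n\mid n\in\omega\}\cup\{\emptyset,A\}$ under pairwise unions and intersections.
   Context: An up-set of a poset is a subset closed upward; ${\uparrow}(a)=\{b\mid b\supseteq a\}$ and ${\downarrow}(a)=\{b\mid b\subseteq a\}$ are the principal up-set and principal down-set determined by $a\in A$; complements are in $A$. The natural topology on $2^A$ (the set of subsets of $A$) is the product topology of copies of the discrete space $\{0,1\}$, with subbasis the sets $\{x\mid a\in x\}$ and $\{x\mid a\notin x\}$ for $a\in A$. *)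

(* Defs.v *)
From mathcomp Require Import all_boot.
From mathcomp Require Import boolp classical_sets.
Set Implicit Arguments. Unset Strict Implicit. Unset Printing Implicit Defensive.
Local Open Scope classical_set_scope.

(* A = 2^omega, ordered by inclusion; elements of 2^A are [set (set nat)]. *)
Definition Aset := set nat.

Definition upset (x : set Aset) : Prop :=
  forall a b : Aset, a `<=` b -> x a -> x b.

Definition up (a : Aset) : set Aset := [set b | a `<=` b].
Definition down (a : Aset) : set Aset := [set b | b `<=` a].

(* Basic open sets of the product topology on 2^A: finite intersections of
   subbasic sets {x | a \in x} (bit true) and {x | a \notin x} (bit false). *)
Definition basic_open (n : nat) (s : nat -> Aset) (bt : nat -> bool)
  : set (set Aset) :=
  [set y | forall i, (i < n)%N -> (y (s i) <-> bt i = true)].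

Definition natural_open (V : set (set Aset)) : Prop :=
  forall y, V y -> exists n s bt, basic_open n s bt y /\ basic_open n s bt `<=` V.

Definition isolated_in (U : set (set Aset)) (x : set Aset) : Prop :=
  U x /\ exists V, natural_open V /\ V `&` U = [set x].

Definition e_ (n : nat) : set Aset := [set b | b n].

Inductive lattice_gen : set Aset -> Prop :=
  | lg_e : forall n, lattice_gen (e_ n)
  | lg_empty : lattice_gen set0
  | lg_full : lattice_gen setT
  | lg_union : forall x y, lattice_gen x -> lattice_gen y -> lattice_gen (x `|` y)
  | lg_inter : forall x y, lattice_gen x -> lattice_gen y -> lattice_gen (x `&` y).

Definition fin_union_up (x : set Aset) : Prop :=
  exists (n : nat) (a : nat -> Aset),
    x = [set b | exists i, (i < n)%N /\ up (a i) b].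

Definition fin_inter_compl_down (x : set Aset) : Prop :=
  exists (m : nat) (c : nat -> Aset),
    x = [set b | forall i, (i < m)%N -> (~` down (c i)) b].

(* Main.v *)
Require Import Defs.
From mathcomp Require Import all_boot.
From mathcomp Require Import boolp classical_sets.
From Stdlib Require Import Classical.
From Stdlib Require List.
From mathcomp Require Import zify.
Set Implicit Arguments. Unset Strict Implicit.
Local Open Scope classical_set_scope.

Lemma seteq (T : Type) (A B : set T) : (forall b, A b <-> B b) -> A = B.
Proof. move=> H; apply: funext => b; apply: propext; exact: H. Qed.

Definition FU (l : list Aset) : set Aset :=
  fun b => exists a, List.In a l /\ a `<=` b.
Definition FD (l : list Aset) : set Aset :=
  fun b => forall c, List.In c l -> ~ (b `<=` c).

Lemma notFD l b : ~ FD l b -> exists c, List.In c l /\ b `<=` c.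
Proof.
move=> H; apply: NNPP => H2; apply: H => c Hc Hbc; apply: H2; by exists c.
Qed.

Lemma fu_iff x : fin_union_up x <-> exists l, x = FU l.
Proof.
split.
- move=> [n [a ->]]; exists (List.map a (List.seq 0 n)); apply: seteq => b; split.
  + move=> [i [Hi Hab]]; exists (a i); split => //.
    apply/List.in_map_iff; exists i; split => //; apply/List.in_seq; lia.
  + move=> [a' [/List.in_map_iff [i [<- /List.in_seq Hi]] Hab]].
    exists i; split => //; apply/ltP; lia.
- move=> [l ->]; exists (length l), (fun i => List.nth i l set0).
  apply: seteq => b; split.
  + move=> [a [/(List.In_nth _ _ set0) [i [Hi <-]] Hab]]; exists i; split => //.
    by apply/ltP.
  + move=> [i [/ltP Hi Hab]]; exists (List.nth i l set0); split => //.
    exact: List.nth_In.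
Qed.

Lemma fd_iff x : fin_inter_compl_down x <-> exists l, x = FD l.
Proof.
split.
- move=> [n [a ->]]; exists (List.map a (List.seq 0 n)); apply: seteq => b; split.
  + move=> H c /List.in_map_iff [i [<- /List.in_seq Hi]].
    apply: (H i); apply/ltP; lia.
  + move=> H i Hi; apply: H; apply/List.in_map_iff; exists i; split => //.
    apply/List.in_seq; lia.
- move=> [l ->]; exists (length l), (fun i => List.nth i l set0).
  apply: seteq => b; split.
  + move=> H i /ltP Hi; apply: H; exact: List.nth_In.
  + move=> H c /(List.In_nth _ _ set0) [i [Hi <-]]; apply: H; by apply/ltP.
Qed.

Lemma ii_iso x l1 l2 : upset x -> x = FU l1 -> x = FD l2 -> isolated_in upset x.
Proof.
move=> Ux H1 H2; split => //.
pose n1 := length l1; pose n2 := length l2.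
pose s := fun i => if (i < n1)%N then List.nth i l1 set0 else List.nth (i - n1) l2 set0.
pose bt := fun i => (i < n1)%N.
exists (basic_open (n1 + n2) s bt); split.
  by move=> y Hy; exists (n1 + n2), s, bt; split.
apply: seteq => y; split.
- move=> [Vy Uy]; rewrite /set1 /=; apply: seteq => b; split.
  + move=> yb; apply: NNPP => xb; rewrite H2 in xb.
    have [c [Hc Hbc]] := notFD xb.
    have [j [Hj Ej]] := List.In_nth _ _ set0 Hc.
    have Hlt : (n1 + j < n1 + n2)%N by rewrite ltn_add2l; apply/ltP.
    have := Vy (n1 + j) Hlt; rewrite /s /bt.
    have -> : (n1 + j < n1)%N = false by lia.
    rewrite addKn Ej => Hv.
    have : false = true by apply/Hv; apply: Uy Hbc yb.
    by [].
  + rewrite H1 => -[a [Ha Hab]].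
    have [j [Hj Ej]] := List.In_nth _ _ set0 Ha.
    have Hj' : (j < n1)%N by apply/ltP.
    have := Vy j; rewrite /s /bt Hj' Ej => Hv.
    apply: Uy Hab _; apply/Hv => //; lia.
- rewrite /set1 /= => ->; split => //.
  move=> i Hi; rewrite /s /bt; case: ifP => Hin.
  + split => // _; rewrite H1; exists (List.nth i l1 set0); split => //.
    apply: List.nth_In; by apply/ltP.
  + split => // Hx; exfalso; move: Hx; rewrite {1}H2 => Hx.
    apply: (Hx (List.nth (i - n1) l2 set0)) => //.
    apply: List.nth_In; apply/ltP; rewrite /n2 in Hi; lia.
Qed.

Lemma iso_ii x : upset x -> isolated_in upset x ->
  (exists l, x = FU l) /\ (exists l, x = FD l).
Proof.
move=> Ux [_ [V [oV HV]]].
have key : forall y, (V `&` upset) y <-> y = x by move=> y; rewrite HV.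
have [Vx _] : (V `&` upset) x by apply/key.
have [n [s [bt [Bx BV]]]] := oV x Vx.
have uniq : forall y, upset y -> basic_open n s bt y -> y = x.
  by move=> y Uy By; apply/key; split => //; apply: BV.
split.
- exists (List.map s (List.filter (fun i => bt i) (List.seq 0 n))).
  symmetry; apply: uniq.
  + move=> a b ab [c [Hc Hca]]; exists c; split => //; by move=> t /Hca /ab.
  + move=> i Hi; split.
    * move=> [a [/List.in_map_iff [j [<- /List.filter_In [/List.in_seq Hj bj]]] Hji]].
      apply: NNPP => nbi.
      have xj : x (s j) by apply/(Bx j) => //; apply/ltP; lia.
      have xi : x (s i) by apply: Ux Hji xj.
      by apply: nbi; apply/(Bx i).
    * move=> bi; exists (s i); split => //.
      apply/List.in_map_iff; exists i; split => //; apply/List.filter_In; split => //.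
      apply/List.in_seq; lia.
- exists (List.map s (List.filter (fun i => ~~ bt i) (List.seq 0 n))).
  symmetry; apply: uniq.
  + move=> a b ab Ha c Hc Hbc; apply: (Ha c Hc) => t /ab /Hbc //.
  + move=> i Hi; split.
    * move=> H; apply: NNPP => nbi.
      apply: (H (s i)) => //.
      apply/List.in_map_iff; exists i; split => //; apply/List.filter_In; split.
      apply/List.in_seq; lia. by apply/negP => /eqP; case: (bt i) nbi.
    * move=> bi c /List.in_map_iff [j [<- /List.filter_In [/List.in_seq Hj bj]]] Hij.
      have xi : x (s i) by apply/(Bx i).
      have xj : x (s j) by apply: Ux Hij xi.
      have : bt j = true by apply/(Bx j) => //; apply/ltP; lia.
      by move: bj => /negP.
Qed.

Lemma lg_ii x : lattice_gen x -> (exists l, x = FU l) /\ (exists l, x = FD l).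
Proof.
elim => {x}.
- move=> n; split.
  + exists (cons [set n] nil); apply: seteq => b; split.
    * move=> bn; exists [set n]; split; first by left.
      by move=> t ->.
    * by move=> [a [[<-|[]] H]]; apply: H.
  + exists (cons (~` [set n]) nil); apply: seteq => b; split.
    * move=> bn c [<-|[]] H; exact: (H n bn).
    * move=> H; apply: NNPP => nb; apply: (H (~` [set n])); first by left.
      by move=> t bt tn; apply: nb; rewrite -tn.
- split.
  + exists nil; apply: seteq => b; split => //; by move=> [a [[] _]].
  + exists (cons setT nil); apply: seteq => b; split => // H.
    by exfalso; apply: (H setT); [left|].
- split.
  + exists (cons set0 nil); apply: seteq => b; split => // _.
    by exists set0; split; [left|].
  + by exists nil; apply: seteq => b; split => // _ c [].
- move=> x y _ [[l1 E1] [l2 F1]] _ [[l1' E2] [l2' F2]]; split.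
  + exists (List.app l1 l1'); rewrite E1 E2; apply: seteq => b; split.
    * move=> [[a [Ha Hab]]|[a [Ha Hab]]]; exists a; split => //;
        apply/List.in_app_iff; by [left|right].
    * by move=> [a [/List.in_app_iff [Ha|Ha] Hab]]; [left|right]; exists a.
  + exists (List.flat_map (fun c => List.map (fun c' => c `&` c') l2') l2).
    rewrite F1 F2; apply: seteq => b; split.
    * move=> Hb c /List.in_flat_map [c1 [H1 /List.in_map_iff [c2 [<- H2]]]] Hbc.
      case: Hb => Hb.
      - by apply: (Hb c1 H1) => t /Hbc [].
      - by apply: (Hb c2 H2) => t /Hbc [].
    * move=> H; apply: NNPP => nb.
      have [c1 [H1 B1]] : exists c, List.In c l2 /\ b `<=` c.
        by apply: notFD => h; apply: nb; left.
      have [c2 [H2 B2]] : exists c, List.In c l2' /\ b `<=` c.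
        by apply: notFD => h; apply: nb; right.
      apply: (H (c1 `&` c2)).
        apply/List.in_flat_map; exists c1; split => //.
        by apply/List.in_map_iff; exists c2.
      by move=> t bt; split; [apply: B1|apply: B2].
- move=> x y _ [[l1 E1] [l2 F1]] _ [[l1' E2] [l2' F2]]; split.
  + exists (List.flat_map (fun a => List.map (fun a' => a `|` a') l1') l1).
    rewrite E1 E2; apply: seteq => b; split.
    * move=> [[a1 [H1 B1]] [a2 [H2 B2]]]; exists (a1 `|` a2); split.
        apply/List.in_flat_map; exists a1; split => //.
        by apply/List.in_map_iff; exists a2.
      by move=> t [/B1|/B2].
    * move=> [a [/List.in_flat_map [a1 [H1 /List.in_map_iff [a2 [<- H2]]]] Hab]].
      split; [exists a1|exists a2]; split => // t ht; apply: Hab; by [left|right].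
  + exists (List.app l2 l2'); rewrite F1 F2; apply: seteq => b; split.
    * by move=> [Hb Hb'] c /List.in_app_iff [Hc|Hc]; [apply: Hb|apply: Hb'].
    * move=> H; split => c Hc; apply: H; apply/List.in_app_iff; by [left|right].
Qed.

Definition G (K : list nat) : set Aset := fun b => forall k, List.In k K -> b k.

Lemma lg_G K : lattice_gen (G K).
Proof.
elim: K => [|k K IH].
- have -> : G nil = setT by apply: seteq => b; split => // _ k [].
  exact: lg_full.
- have -> : G (cons k K) = e_ k `&` G K.
    apply: seteq => b; split.
    + move=> H; split; first by apply: H; left.
      by move=> k' Hk; apply: H; right.
    + by move=> [Hk HK] k' [<-|Hk']; [|apply: HK].
  by apply: lg_inter => //; apply: lg_e.
Qed.

Lemma findK a l2 : (forall c, List.In c l2 -> ~ a `<=` c) ->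
  exists K, (forall k, List.In k K -> a k) /\ (forall b, G K b -> FD l2 b).
Proof.
elim: l2 => [|c l2 IH] H.
- by exists nil; split => // b _ c [].
- have [K [HK1 HK2]] : exists K, (forall k, List.In k K -> a k) /\ (forall b, G K b -> FD l2 b).
    by apply: IH => c' Hc'; apply: H; right.
  have [k [ak nck]] : exists k, a k /\ ~ c k.
    apply: NNPP => nn; apply: (H c); first by left.
    by move=> t at'; apply: NNPP => nct; apply: nn; exists t.
  exists (cons k K); split.
  + by move=> k' [<-|Hk]; [|apply: HK1].
  + move=> b Hb c' [<-|Hc'] Hbc.
    * by apply: nck; apply: Hbc; apply: Hb; left.
    * by apply: (HK2 b) Hbc => // k' Hk'; apply: Hb; right.
Qed.

Lemma union_lg (x : set Aset) l :
  (forall a, List.In a l -> exists K, (forall k, List.In k K -> a k) /\ G K `<=` x) ->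
  exists y, lattice_gen y /\ FU l `<=` y /\ y `<=` x.
Proof.
elim: l => [|a l IH] H.
- exists set0; split; first exact: lg_empty.
  by split => b // [a [[] _]].
- have [K [HK1 HK2]] := H a (or_introl erefl).
  have [y [Ly [Hy1 Hy2]]] : exists y, lattice_gen y /\ FU l `<=` y /\ y `<=` x.
    by apply: IH => a' Ha'; apply: H; right.
  exists (G K `|` y); split; first by apply: lg_union => //; apply: lg_G.
  split.
  + move=> b [a' [[<-|Ha'] Hab]].
    * by left => k Hk; apply: Hab; apply: HK1.
    * by right; apply: Hy1; exists a'.
  + by move=> b [/HK2|/Hy2].
Qed.

Lemma ii_lg x l1 l2 : x = FU l1 -> x = FD l2 -> lattice_gen x.
Proof.
move=> E1 E2.
have [y [Ly [Hy1 Hy2]]] : exists y, lattice_gen y /\ FU l1 `<=` y /\ y `<=` x.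
  apply: union_lg => a Ha.
  have xa : x a by rewrite E1; exists a; split.
  move: xa; rewrite {1}E2 => xa.
  have [K [HK1 HK2]] := findK xa.
  by exists K; split => // b /HK2; rewrite E2.
have -> : x = y.
  apply: seteq => b; split; [rewrite {1}E1; apply: Hy1 | apply: Hy2].
exact: Ly.
Qed.

Theorem corollary5p2 (x : set Aset) :
  upset x ->
  (isolated_in upset x <-> (fin_union_up x /\ fin_inter_compl_down x)) /\
  ((fin_union_up x /\ fin_inter_compl_down x) <-> lattice_gen x).
Proof.
move=> Ux; rewrite fu_iff fd_iff; split; split.
- exact: iso_ii.
- by move=> [[l1 E1] [l2 E2]]; apply: ii_iso E1 E2.
- by move=> [[l1 E1] [l2 E2]]; apply: ii_lg E1 E2.
- exact: lg_ii.
Qed.
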